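(* Consider the stochastic bipartite matching model described in the context, under the stability condition, with stationary distribution $\pi$. For $\mathcal{A}\in\mathcal{J}_0$ define $\ell_{\mathcal{I}}(\mathcal{A})=\sum_{(c,d)\in\Pi_{\mathcal{A}}}|c|\,\pi(c,d)$ (so that $\ell_{\mathcal{I}}(\mathcal{A})/\pi(\mathcal{A})$ is the stationary mean number of unmatched customers given that the set of unmatched classes is $\mathcal{A}$), with the convention $\ell_{\mathcal{I}}(\mathcal{A})=0$ if $\mathcal{A}\notin\mathcal{J}_0$. Then the stationary mean number of unmatched customers is $L_{\mathcal{I}}=\sum_{\mathcal{A}\in\mathcal{J}_0}\ell_{\mathcal{I}}(\mathcal{A})$, $\ell_{\mathcal{I}}(\emptyset)=0$, and for each $\mathcal{A}\in\mathcal{J}$, \[ \begin{aligned} \Delta(\mathcal{A})\,\ell_{\mathcal{I}}(\mathcal{A}) ={}& \mu(\mathcal{K}(\mathcal{A}\cap\mathcal{I}))\,\lambda(\mathcal{I}(\mathcal{A}\cap\mathcal{K}))\,\pi(\mathcal{A}) + \mu(\mathcal{A}\cap\mathcal{K})\sum_{i\in\mathcal{A}\cap\mathcal{I}}\lambda_i\,\ell_{\mathcal{I}}(\mathcal{A}\setminus\{i\})\\ &+\lambda(\mathcal{A}\cap\mathcal{I})\sum_{k\in\mathcal{A}\cap\mathcal{K}}\mu_k\,\ell_{\mathcal{I}}(\mathcal{A}\setminus\{k\}) + \sum_{i\in\mathcal{A}\cap\mathcal{I}}\sum_{k\in\mathcal{A}\cap\mathcal{K}}\lambda_i\mu_k\,\ell_{\mathcal{I}}(\mathcal{A}\setminus\{i,k\}).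 \end{aligned} \]
   Context: Let $\mathcal{I}$ (customer classes) and $\mathcal{K}$ (server classes) be disjoint finite non-empty sets, and consider a connected bipartite graph (the compatibility graph) on $\mathcal{I}\cup\mathcal{K}$ whose edges all join an element of $\mathcal{I}$ to an element of $\mathcal{K}$; write $i\sim k$ if $i\in\mathcal{I}$ and $k\in\mathcal{K}$ are adjacent and $i\nsim k$ otherwise. For $i\in\mathcal{I}$ let $\mathcal{K}_i=\{k\in\mathcal{K}: i\sim k\}$ and for $k\in\mathcal{K}$ let $\mathcal{I}_k=\{i\in\mathcal{I}: i\sim k\}$. Let $\lambda_i>0$ ($i\in\mathcal{I}$) and $\mu_k>0$ ($k\in\mathcal{K}$) with $\sum_i\lambda_i=\sum_k\mu_k=1$. For $\mathcal{A}\subseteq\mathcal{I}$ write $\lambda(\mathcal{A})=\sum_{i\in\mathcal{A}}\lambda_i$ and $\mathcal{K}(\mathcal{A})=\bigcup_{i\in\mathcal{A}}\mathcal{K}_i$; for $\mathcal{A}\subseteq\mathcal{K}$ write $\mu(\mathcal{A})=\sum_{k\in\mathcal{A}}\mu_k$ and $\mathcal{I}(\mathcal{A})=\bigcup_{k\in\mathcal{A}}\mathcal{I}_k$. Model: time is slotted; in each slot exactly one customer and one server arrive, the customer being of class $i$ with probability $\lambda_i$ and the server of class $k$ with probability $\mu_k$, independently within and across slots. Unmatched customers and unmatched servers wait in two queues in arrival order. Upon each arrival (first-come-first-matched policy): (1) the incoming customer is matched with the longest-waiting compatible unmatched server, if any; (2) the incoming server is matched with the longest-waiting compatible unmatched customer,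 if any; (3) if neither can be matched with a waiting item, they are matched with each other if compatible; (4) any incoming item still unmatched is appended to the back of its queue. Matched items leave immediately. The state is $(c,d)$ with $c=(c_1,\dots,c_n)$ the classes of unmatched customers and $d=(d_1,\dots,d_n)$ the classes of unmatched servers, in arrival order (the two lengths are always equal); the state space is $\Pi=\bigcup_{n\ge0}\{(c,d)\in\mathcal{I}^n\times\mathcal{K}^n: c_p\nsim d_q\ \forall p,q\}$, and $\varnothing$ denotes the empty state. For a sequence $c$, $|c|$ denotes its length. Stability condition (assumed): $\lambda(\mathcal{A})<\mu(\mathcal{K}(\mathcal{A}))$ for every non-empty $\mathcal{A}\subsetneq\mathcal{I}$ (equivalently $\mu(\mathcal{A})<\lambda(\mathcal{I}(\mathcal{A}))$ for every non-empty $\mathcal{A}\subsetneq\mathcal{K}$). Then the Markov chain of states is ergodic with stationary distribution $\pi(c,d)=\pi(\varnothing)\prod_{p=1}^n \frac{\lambda_{c_p}}{\mu(\mathcal{K}(\{c_1,\dots,c_p\}))}\frac{\mu_{d_p}}{\lambda(\mathcal{I}(\{d_1,\dots,d_p\}))}$, $(c,d)\in\Pi$. Let $\mathcal{J}$ be the family of independent sets $\mathcal{A}\subseteq\mathcal{I}\cup\mathcal{K}$ of the compatibility graph such that $\mathcal{A}\cap\mathcal{I}$ and $\mathcal{A}\cap\mathcal{K}$ are both non-empty, and $\mathcal{J}_0=\mathcal{J}\cup\{\emptyset\}$. For $\mathcal{A}\in\mathcal{J}_0$, let $\Pi_{\mathcal{A}}$ be the set of $(c,d)\in\Pi$ with $\{c_1,\dots,c_n\}=\mathcal{A}\cap\mathcal{I}$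 and $\{d_1,\dots,d_n\}=\mathcal{A}\cap\mathcal{K}$, and $\pi(\mathcal{A})=\sum_{(c,d)\in\Pi_{\mathcal{A}}}\pi(c,d)$; by convention $\pi(\mathcal{A})=0$ if $\mathcal{A}\notin\mathcal{J}_0$. For $\mathcal{A}\in\mathcal{J}$, $\Delta(\mathcal{A})=\mu(\mathcal{K}(\mathcal{A}\cap\mathcal{I}))\,\lambda(\mathcal{I}(\mathcal{A}\cap\mathcal{K}))-\lambda(\mathcal{A}\cap\mathcal{I})\,\mu(\mathcal{A}\cap\mathcal{K})$. *)

(* Defs.v *)
From mathcomp Require Import all_boot all_order all_algebra.
From mathcomp Require Import all_classical all_reals all_analysis.
Set Implicit Arguments. Unset Strict Implicit. Unset Printing Implicit Defensive.
Import Order.TTheory GRing.Theory Num.Theory.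
Local Open Scope ring_scope.

Section Model.
Variables (R : realType) (I K : finType) (adj : I -> K -> bool).
Variables (lam : I -> R) (mu : K -> R).

Definition cgraph : rel (I + K)%type := fun x y =>
  match x, y with
  | inl i, inr k => adj i k
  | inr k, inl i => adj i k
  | _, _ => false
  end.

Definition graph_connected : Prop := forall x y : (I + K)%type, connect cgraph x y.

Definition lam_of (A : {set I}) : R := \sum_(i in A) lam i.
Definition mu_of (A : {set K}) : R := \sum_(k in A) mu k.
Definition Kset (A : {set I}) : {set K} := [set k | [exists i in A, adj i k]].
Definition Iset (A : {set K}) : {set I} := [set i | [exists k in A, adj i k]].

Definition stable : Prop :=
  forall A : {set I}, A != finset.set0 -> A != finset.setT -> lam_of A < mu_of (Kset A).

(* A subset of I u K is represented as a pair (AI, AK). *)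
Definition independent (AI : {set I}) (AK : {set K}) : bool :=
  [forall i in AI, forall k in AK, ~~ adj i k].
Definition inJ (AI : {set I}) (AK : {set K}) : bool :=
  [&& independent AI AK, AI != finset.set0 & AK != finset.set0].
Definition inJ0 (AI : {set I}) (AK : {set K}) : bool :=
  inJ AI AK || ((AI == finset.set0) && (AK == finset.set0)).

Definition in_Pi n (c : n.-tuple I) (d : n.-tuple K) : bool :=
  all (fun i => all (fun k => ~~ adj i k) d) c.

Definition prefix_set (T : finType) (s : seq T) (p : nat) : {set T} :=
  [set x | x \in take p.+1 s].

(* unnormalised stationary weight: prod_{p=1}^n
   lam_{c_p}/mu(K({c_1..c_p})) * mu_{d_p}/lam(I({d_1..d_p})) *)
Definition weight n (c : n.-tuple I) (d : n.-tuple K) : R :=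
  \prod_(p < n) (lam (tnth c p) / mu_of (Kset (prefix_set c p))
                 * (mu (tnth d p) / lam_of (Iset (prefix_set d p)))).

Definition rseries (u : nat -> R) : R := limn (fun N => \sum_(0 <= n < N) u n).

Definition Zconst : R :=
  rseries (fun n => \sum_(c : n.-tuple I) \sum_(d : n.-tuple K | in_Pi c d) weight c d).
Definition pi_empty : R := Zconst^-1.

Definition pi_state n (c : n.-tuple I) (d : n.-tuple K) : R := pi_empty * weight c d.

Definition in_PiA (AI : {set I}) (AK : {set K}) n (c : n.-tuple I) (d : n.-tuple K) : bool :=
  [&& in_Pi c d, [set x | x \in c] == AI & [set x | x \in d] == AK].

Definition piA (AI : {set I}) (AK : {set K}) : R :=
  if inJ0 AI AK then
    rseries (fun n => \sum_(c : n.-tuple I) \sum_(d : n.-tuple K | in_PiA AI AK c d)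
                         pi_state c d)
  else 0.

Definition ellI (AI : {set I}) (AK : {set K}) : R :=
  if inJ0 AI AK then
    rseries (fun n => \sum_(c : n.-tuple I) \sum_(d : n.-tuple K | in_PiA AI AK c d)
                         n%:R * pi_state c d)
  else 0.

Definition LI : R :=
  rseries (fun n => \sum_(c : n.-tuple I) \sum_(d : n.-tuple K | in_Pi c d)
                       n%:R * pi_state c d).

Definition Delta (AI : {set I}) (AK : {set K}) : R :=
  mu_of (Kset AI) * lam_of (Iset AK) - lam_of AI * mu_of AK.

End Model.

(* Main.v *)
Require Import Defs.
From mathcomp Require Import all_boot all_order all_algebra.
From mathcomp Require Import all_classical all_reals all_analysis.
From mathcomp Require Import ring lra.
Import Order.TTheory GRing.Theory Num.Theory.
Import numFieldNormedType.Exports.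
Local Open Scope classical_set_scope.
Local Open Scope ring_scope.

Lemma series0 {R : realType} (f : nat -> R) : series f 0%N = 0.
Proof. by rewrite seriesEnat /= big_geq. Qed.

Lemma series_rec {R : realType} {f h : nat -> R} {u v : R} :
  (forall n, u * f n.+1 = v * f n + h n) ->
  forall N, u * series f N.+1 = u * f 0%N + v * series f N + series h N.
Proof.
move=> E; elim=> [|N IH].
  by rewrite seriesSr !series0; lra.
rewrite seriesSr mulrDr IH E [series f N.+1]seriesSr [series h N.+1]seriesSr.
lra.
Qed.

Lemma series_ge0 {R : realType} {f : nat -> R} N :
  (forall n, 0 <= f n) -> 0 <= series f N.
Proof. by move=> H; rewrite seriesEnat /=; apply: sumr_ge0 => i _. Qed.

Lemma series_nd {R : realType} {f : nat -> R} :
  (forall n, 0 <= f n) -> nondecreasing_seq (series f).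
Proof. by move=> H; rewrite seriesEnat; apply: nondecreasing_series => n _ _. Qed.

Lemma G1 {R : realType} (f h : nat -> R) (u v : R) :
  0 <= v -> v < u -> (forall n, 0 <= f n) -> (forall n, 0 <= h n) ->
  (forall n, u * f n.+1 = v * f n + h n) ->
  cvgn (series h) -> cvgn (series f).
Proof.
move=> v0 vu f0 h0 E ch.
have hnd := series_nd h0.
have Hle : forall N, series h N <= limn (series h).
  by move=> N; apply: nondecreasing_cvgn_le.
have fnd := series_nd f0.
have H0 : 0 <= limn (series h) by apply: le_trans (Hle 0%N); rewrite series0.
have u0 : 0 < u by apply: le_lt_trans vu.
have uf0 : 0 <= u * f 0%N by apply: mulr_ge0; [apply: ltW|].
apply: nondecreasing_is_cvgn => //.
exists ((u * f 0%N + limn (series h)) / (u - v)) => _ [N _ <-].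
rewrite ler_pdivlMr ?subr_gt0 //.
case: N => [|N].
  by rewrite series0 mul0r; apply: addr_ge0.
have := series_rec E N.
have := fnd _ _ (leqnSn N); have := Hle N.
have := series_ge0 N f0.
move=> a b c d. nra.
Qed.

Lemma G2 {R : realType} (f h : nat -> R) (u v : R) :
  (forall n, u * f n.+1 = v * f n + h n) ->
  cvgn (series f) -> cvgn (series h) ->
  u * limn (series f) = u * f 0%N + v * limn (series f) + limn (series h).
Proof.
move=> E cf ch.
have e : (fun N => u * series f N.+1) = (fun N => u * f 0%N + v * series f N + series h N).
  by apply: funext => N; apply: series_rec.
have c1 : (fun N => u * series f N.+1) @ \oo --> u * limn (series f).
  apply: cvgMl_tmp. by rewrite (cvg_shiftS (series f)).
have c2 : (fun N => u * f 0%N + v * series f N + series h N) @ \oo -->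
   u * f 0%N + v * limn (series f) + limn (series h).
  apply: cvgD => //; apply: cvgD; first exact: cvg_cst.
  exact: cvgMl_tmp.
have L1 := cvg_lim (@Rhausdorff R) c1. have L2 := cvg_lim (@Rhausdorff R) c2.
rewrite e in L1. exact: (etrans (esym (L1 eventually_filter)) (L2 eventually_filter)).
Qed.

Lemma limE {R : realType} {u : nat -> R} {l : R} : u @ \oo --> l -> limn u = l.
Proof. by move=> H; apply: cvg_lim. Qed.

Lemma series_scale {R : realType} (F : nat -> R) c l :
  series F @ \oo --> l -> series (fun n => c * F n) @ \oo --> c * l.
Proof.
move=> H.
have -> : series (fun n => c * F n) = (fun N => c * series F N).
  by apply: funext => N; rewrite !seriesEnat /= mulr_sumr.
exact: cvgMl_tmp.
Qed.

Lemma series_add {R : realType} (F G : nat -> R) l1 l2 :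
  series F @ \oo --> l1 -> series G @ \oo --> l2 ->
  series (fun n => F n + G n) @ \oo --> l1 + l2.
Proof.
move=> H1 H2.
have -> : series (fun n => F n + G n) = (fun N => series F N + series G N).
  by apply: funext => N; rewrite !seriesEnat /= big_split.
exact: cvgD.
Qed.

Lemma series_sum_cvg {R : realType} {T : Type} (r : seq T) (P : pred T)
  (F : T -> nat -> R) (l : T -> R) :
  (forall i, P i -> series (F i) @ \oo --> l i) ->
  series (fun n => \sum_(i <- r | P i) F i n) @ \oo --> \sum_(i <- r | P i) l i.
Proof.
move=> H; elim: r => [|a r IH].
  have -> : series (fun n => \sum_(i <- [::] | P i) F i n) = (fun _ => 0).
    apply: funext => N; rewrite seriesEnat /= big1 // => n _; by rewrite big_nil.
  rewrite big_nil; exact: cvg_cst.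
rewrite big_cons; case: (boolP (P a)) => Pa.
  have -> : series (fun n => \sum_(i <- a :: r | P i) F i n) =
            series (fun n => F a n + \sum_(i <- r | P i) F i n).
    by apply: funext => N; rewrite !seriesEnat /=; apply: eq_bigr => n _; rewrite big_cons Pa.
  exact: series_add (H _ Pa) IH.
have -> : series (fun n => \sum_(i <- a :: r | P i) F i n) =
          series (fun n => \sum_(i <- r | P i) F i n).
  by apply: funext => N; rewrite !seriesEnat /=; apply: eq_bigr => n _; rewrite big_cons (negbTE Pa).
exact: IH.
Qed.

Lemma G3 {R : realType} (f h : nat -> R) (u v : R) :
  0 <= v -> v < u -> (forall n, 0 <= f n) -> (forall n, 0 <= h n) ->
  (forall n, u * f n.+1 = v * f n + h n) -> f 0%N = 0 ->
  cvgn (series f) -> cvgn (series (fun n => n%:R * h n)) ->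
  cvgn (series (fun n => n%:R * f n)) /\
  u * limn (series (fun n => n%:R * f n)) =
    v * limn (series (fun n => n%:R * f n)) + u * limn (series f)
    + limn (series (fun n => n%:R * h n)).
Proof.
move=> v0 vu f0 h0 E f00 cf cnh.
have u0 : 0 < u by apply: le_lt_trans vu.
pose g n := n%:R * f n.
pose h' n := u * f n.+1 + n%:R * h n.
have E' : forall n, u * g n.+1 = v * g n + h' n.
  move=> n; rewrite /g /h' -natr1.
  have -> : u * ((n%:R + 1) * f n.+1) = (n%:R + 1) * (u * f n.+1) by ring.
  rewrite E; ring.
have sh' : series h' = (fun N => u * series f N.+1 + series (fun n => n%:R * h n) N).
  apply: funext => N; rewrite !seriesEnat /= big_split /= -mulr_sumr.
  by rewrite [in RHS]big_nat_recl // f00 add0r.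
have ch' : series h' @ \oo --> u * limn (series f) + limn (series (fun n => n%:R * h n)).
  rewrite sh'; apply: cvgD => //; apply: cvgMl_tmp.
  by rewrite (cvg_shiftS (series f)).
have g0 : forall n, 0 <= g n by move=> n; apply: mulr_ge0.
have h'0 : forall n, 0 <= h' n.
  by move=> n; apply: addr_ge0; apply: mulr_ge0 => //; apply: ltW.
have cg : cvgn (series g) by apply: (@G1 R g h' u v v0 vu g0 h'0 E'); apply: cvgP ch'.
split => //.
have := @G2 R g h' u v E' cg (cvgP _ ch').
rewrite /g f00 !mulr0 add0r (limE ch').
move=> ->; ring.
Qed.

Set Implicit Arguments. Unset Strict Implicit. Unset Printing Implicit Defensive.

Lemma sum_rcons (V : nmodType) (T : finType) n (F : n.+1.-tuple T -> V) :
  \sum_(c : n.+1.-tuple T) F c = \sum_(t : n.-tuple T) \sum_(x : T) F (rcons_tuple t x).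
Proof.
rewrite pair_big /=.
rewrite (reindex (fun p : n.-tuple T * T => rcons_tuple p.1 p.2)) //.
exists (fun c : n.+1.-tuple T => (belast_tuple (thead c) (behead_tuple c), last (thead c) (behead c))).
  move=> [t x] _ /=.
  have -> : last (thead (rcons_tuple t x)) (behead (rcons_tuple t x)) = x.
    by case: t => [[|a s] /= sz]; rewrite ?last_rcons // (tnth_nth x) /=.
  congr pair; apply: val_inj => /=.
  by case: t => [[|a s] /= sz]; rewrite ?belast_rcons // (tnth_nth x) /=.
move=> c _ /=; apply: val_inj => /=.
rewrite -lastI.
by case: c => [[|a s] //= sz]; rewrite (tnth_nth a).
Qed.

Definition Sset (T : finType) (s : seq T) : {set T} := [set x | x \in s].

Lemma prefix_rcons (T : finType) n (c : n.-tuple T) x (p : 'I_n) :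
  prefix_set (rcons c x) p = prefix_set c p.
Proof.
by rewrite /prefix_set -cats1 takel_cat // size_tuple.
Qed.

Lemma prefix_last (T : finType) n (c : n.-tuple T) x :
  prefix_set (rcons c x) n = Sset (rcons c x).
Proof. by rewrite /prefix_set take_oversize // size_rcons size_tuple. Qed.

Lemma weight_rcons (R : realType) (I K : finType) (adj : I -> K -> bool)
  (lam : I -> R) (mu : K -> R) n (c : n.-tuple I) (d : n.-tuple K) i k :
  weight adj lam mu (rcons_tuple c i) (rcons_tuple d k) =
  weight adj lam mu c d * (lam i / mu_of mu (Kset adj (Sset (rcons c i))) *
     (mu k / lam_of lam (Iset adj (Sset (rcons d k))))).
Proof.
rewrite /weight big_ord_recr /=; congr (_ * _).
  apply: eq_bigr => p _.
  rewrite !(tnth_nth i) !(tnth_nth k) /= !nth_rcons !size_tuple ltn_ord.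
  by rewrite !prefix_rcons.
rewrite !(tnth_nth i) !(tnth_nth k) /= !nth_rcons !size_tuple ltnn eqxx.
by rewrite !prefix_last.
Qed.

Lemma Sset_rcons (T : finType) (s : seq T) x : Sset (rcons s x) = x |: Sset s.
Proof. by apply/setP => y; rewrite !inE mem_rcons in_cons. Qed.

Lemma setU1_eq (T : finType) (x : T) (S A : {set T}) :
  (x |: S == A) = (x \in A) && ((S == A) || (S == A :\ x)).
Proof.
case: (boolP (x \in S)) => xS.
  have -> : x |: S = S by apply/setP => y; rewrite !inE; case: eqP => // ->.
  case: (eqVneq S A) => [<-|SA]; first by rewrite xS.
  rewrite /=; apply/esym/negbTE/andP => -[xA /eqP SAx].
  by move: xS; rewrite SAx !inE eqxx.
case: (eqVneq S A) => [SA|SA] /=.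
  rewrite -SA (negbTE xS) /=; apply/negbTE/eqP => E.
  by move: xS; rewrite -E finset.setU11.
apply/eqP/andP => [E|[xA /eqP ->]]; last by rewrite finset.setD1K.
by split; [rewrite -E finset.setU11 | rewrite -E finset.setU1K].
Qed.

Definition Q (R : realType) (I K : finType) (adj : I -> K -> bool)
  (lam : I -> R) (mu : K -> R) (AI : {set I}) (AK : {set K}) n : R :=
  \sum_(c : n.-tuple I) \sum_(d : n.-tuple K)
     (if (Sset c == AI) && (Sset d == AK) then weight adj lam mu c d else 0).

Lemma Q_point (R : realType) (I K : finType) (AI : {set I}) (AK : {set K})
  (lam : I -> R) (mu : K -> R) (fx : {set I} -> R) (fy : {set K} -> R) (w : R)
  (S1 : {set I}) (S2 : {set K}) i k :
  fx AI != 0 -> fy AK != 0 ->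
  fx AI * fy AK * (if (i |: S1 == AI) && (k |: S2 == AK) then
     w * (lam i / fx (i |: S1) * (mu k / fy (k |: S2))) else 0)
  = if i \in AI then (if k \in AK then lam i * mu k *
       ((if (S1 == AI) && (S2 == AK) then w else 0) +
        (if (S1 == AI :\ i) && (S2 == AK) then w else 0) +
        (if (S1 == AI) && (S2 == AK :\ k) then w else 0) +
        (if (S1 == AI :\ i) && (S2 == AK :\ k) then w else 0)) else 0) else 0.
Proof.
move=> x0 y0.
have -> : (if (i |: S1 == AI) && (k |: S2 == AK) then
     w * (lam i / fx (i |: S1) * (mu k / fy (k |: S2))) else 0) =
   (if (i |: S1 == AI) && (k |: S2 == AK) then
     w * (lam i / fx AI * (mu k / fy AK)) else 0).
  by case: ifP => // /andP[/eqP -> /eqP ->].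
move: x0 y0; set x := fx AI; set y := fy AK => x0 y0.
rewrite !setU1_eq.
case: (boolP (i \in AI)) => iA /=; last by rewrite mulr0.
case: (boolP (k \in AK)) => kA /=; last by rewrite andbF mulr0.
have D1 : (S1 == AI) && (S1 == AI :\ i) = false.
  apply/negbTE/andP => -[/eqP E1 /eqP E2]; move: iA; rewrite -E1 E2 !inE eqxx //.
have D2 : (S2 == AK) && (S2 == AK :\ k) = false.
  apply/negbTE/andP => -[/eqP E1 /eqP E2]; move: kA; rewrite -E1 E2 !inE eqxx //.
case: (S1 == AI) (S1 == AI :\ i) D1 => [] [] //= _;
case: (S2 == AK) (S2 == AK :\ k) D2 => [] [] //= _;
  rewrite ?mulr0 ?addr0 ?add0r //; field.
all: by rewrite ?x0 ?y0.
Qed.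

Lemma Q_rec (R : realType) (I K : finType) (adj : I -> K -> bool)
  (lam : I -> R) (mu : K -> R) (AI : {set I}) (AK : {set K}) n :
  mu_of mu (Kset adj AI) != 0 -> lam_of lam (Iset adj AK) != 0 ->
  mu_of mu (Kset adj AI) * lam_of lam (Iset adj AK) * Q adj lam mu AI AK n.+1 =
  \sum_(i in AI) \sum_(k in AK) lam i * mu k *
    (Q adj lam mu AI AK n + Q adj lam mu (AI :\ i) AK n +
     Q adj lam mu AI (AK :\ k) n + Q adj lam mu (AI :\ i) (AK :\ k) n).
Proof.
move=> x0 y0.
pose T (c : n.-tuple I) (d : n.-tuple K) (i : I) (k : K) :=
  lam i * mu k *
       ((if (Sset c == AI) && (Sset d == AK) then weight adj lam mu c d else 0) +
        (if (Sset c == AI :\ i) && (Sset d == AK) then weight adj lam mu c d else 0) +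
        (if (Sset c == AI) && (Sset d == AK :\ k) then weight adj lam mu c d else 0) +
        (if (Sset c == AI :\ i) && (Sset d == AK :\ k) then weight adj lam mu c d else 0)).
transitivity (\sum_(c : n.-tuple I) \sum_(d : n.-tuple K) \sum_(i in AI) \sum_(k in AK) T c d i k).
  rewrite /Q sum_rcons mulr_sumr; apply: eq_bigr => c _.
  rewrite mulr_sumr.
  under eq_bigr => i _ do rewrite sum_rcons mulr_sumr.
  rewrite exchange_big /=; apply: eq_bigr => d _.
  rewrite [RHS]big_mkcond /=; apply: eq_bigr => i _.
  rewrite mulr_sumr.
  transitivity (\sum_k (if i \in AI then (if k \in AK then T c d i k else 0) else 0)).
    apply: eq_bigr => k _. rewrite weight_rcons !Sset_rcons (@Q_point _ _ _ _ _ lam mu (fun S => mu_of mu (Kset adj S)) (fun S => lam_of lam (Iset adj S))) //.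
  case: (i \in AI); last by rewrite big1.
  by rewrite [RHS]big_mkcond.
have Hik : forall i k, lam i * mu k *
    (Q adj lam mu AI AK n + Q adj lam mu (AI :\ i) AK n +
     Q adj lam mu AI (AK :\ k) n + Q adj lam mu (AI :\ i) (AK :\ k) n) =
    \sum_(c : n.-tuple I) \sum_(d : n.-tuple K) T c d i k.
  move=> i k; rewrite /Q /T -!big_split mulr_sumr; apply: eq_bigr => c _.
  by rewrite -!big_split mulr_sumr.
symmetry.
transitivity (\sum_(i in AI) \sum_(k in AK) \sum_(c : n.-tuple I) \sum_(d : n.-tuple K) T c d i k).
  by apply: eq_bigr => i _; apply: eq_bigr => k _; exact: Hik.
transitivity (\sum_(i in AI) \sum_(c : n.-tuple I) \sum_(d : n.-tuple K) \sum_(k in AK) T c d i k).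
  apply: eq_bigr => i _; rewrite exchange_big; apply: eq_bigr => c _.
  by rewrite exchange_big.
rewrite exchange_big; apply: eq_bigr => c _.
by rewrite exchange_big.
Qed.

Lemma Sset_tuple0 (T : finType) (c : 0.-tuple T) : Sset c = finset.set0.
Proof. by rewrite (tuple0 c); apply/setP => x; rewrite !inE. Qed.

Lemma Sset_tupleS_neq0 (T : finType) n (c : n.+1.-tuple T) : Sset c != finset.set0.
Proof.
apply/set0Pn; exists (thead c); rewrite inE.
exact: mem_tnth.
Qed.

Lemma Q_0 (R : realType) (I K : finType) (adj : I -> K -> bool)
  (lam : I -> R) (mu : K -> R) (AI : {set I}) (AK : {set K}) :
  (AI != finset.set0) || (AK != finset.set0) -> Q adj lam mu AI AK 0 = 0.
Proof.
move=> H; rewrite /Q big1 // => c _; rewrite big1 // => d _.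
rewrite !Sset_tuple0; case: ifP => // /andP [/eqP E1 /eqP E2].
by move: H; rewrite -E1 -E2 !eqxx.
Qed.

Lemma Q_S0 (R : realType) (I K : finType) (adj : I -> K -> bool)
  (lam : I -> R) (mu : K -> R) (AI : {set I}) (AK : {set K}) n :
  (AI == finset.set0) || (AK == finset.set0) -> Q adj lam mu AI AK n.+1 = 0.
Proof.
move=> H; rewrite /Q big1 // => c _; rewrite big1 // => d _.
case: ifP => // /andP [/eqP E1 /eqP E2].
move: H (Sset_tupleS_neq0 c) (Sset_tupleS_neq0 d); rewrite E1 E2.
by case/orP => /eqP ->; rewrite eqxx.
Qed.

Lemma weight_ge0 (R : realType) (I K : finType) (adj : I -> K -> bool)
  (lam : I -> R) (mu : K -> R) n (c : n.-tuple I) (d : n.-tuple K) :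
  (forall i, 0 <= lam i) -> (forall k, 0 <= mu k) -> 0 <= weight adj lam mu c d.
Proof.
move=> Hl Hm; rewrite /weight; apply: prodr_ge0 => p _.
apply: mulr_ge0; apply: divr_ge0 => //; apply: sumr_ge0 => *; by [].
Qed.

Lemma Q_ge0 (R : realType) (I K : finType) (adj : I -> K -> bool)
  (lam : I -> R) (mu : K -> R) (AI : {set I}) (AK : {set K}) n :
  (forall i, 0 <= lam i) -> (forall k, 0 <= mu k) -> 0 <= Q adj lam mu AI AK n.
Proof.
move=> Hl Hm; rewrite /Q; apply: sumr_ge0 => c _; apply: sumr_ge0 => d _.
by case: ifP => // _; apply: weight_ge0.
Qed.

Lemma in_PiA_eq (I K : finType) (adj : I -> K -> bool) (AI : {set I}) (AK : {set K})
  n (c : n.-tuple I) (d : n.-tuple K) :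
  (forall i k, i \in AI -> k \in AK -> ~~ adj i k) ->
  in_PiA adj AI AK c d = (Sset c == AI) && (Sset d == AK).
Proof.
move=> H; rewrite /in_PiA.
case: (boolP ((Sset c == AI) && (Sset d == AK))) => [/andP [E1 E2]|/negbTE N].
  rewrite andbT.
  apply/allP => i ic; apply/allP => k kd; apply: H.
    by rewrite -(eqP E1) inE.
  by rewrite -(eqP E2) inE.
by rewrite andbF.
Qed.

Definition indepP (I K : finType) (adj : I -> K -> bool) (AI : {set I}) (AK : {set K}) :=
  forall i k, i \in AI -> k \in AK -> ~~ adj i k.

Lemma inner_pi (R : realType) (I K : finType) (adj : I -> K -> bool)
  (lam : I -> R) (mu : K -> R) (AI : {set I}) (AK : {set K}) n (a : R) :
  indepP adj AI AK ->
  \sum_(c : n.-tuple I) \sum_(d : n.-tuple K | in_PiA adj AI AK c d)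
     a * pi_state adj lam mu c d = a * (pi_empty adj lam mu * Q adj lam mu AI AK n).
Proof.
move=> H; rewrite /Q !mulr_sumr; apply: eq_bigr => c _.
rewrite !mulr_sumr big_mkcond; apply: eq_bigr => d _.
by rewrite in_PiA_eq //; case: ifP; rewrite /pi_state ?mulr0.
Qed.

Lemma Q_zero (R : realType) (I K : finType) (adj : I -> K -> bool)
  (lam : I -> R) (mu : K -> R) (AI : {set I}) (AK : {set K}) n :
  indepP adj AI AK -> ~~ inJ0 adj AI AK -> Q adj lam mu AI AK n = 0.
Proof.
move=> H; rewrite /inJ0 /inJ negb_or => /andP [H1 H2].
have Hind : independent adj AI AK.
  by apply/forallP => i; apply/implyP => iA; apply/forallP => k; apply/implyP => kA; apply: H.
move: H1; rewrite Hind /= negb_and !negbK => H1.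
case: n => [|n]; first by apply: Q_0; rewrite -negb_and.
by apply: Q_S0.
Qed.

Lemma piA_Q (R : realType) (I K : finType) (adj : I -> K -> bool)
  (lam : I -> R) (mu : K -> R) (AI : {set I}) (AK : {set K}) :
  indepP adj AI AK ->
  piA adj lam mu AI AK = limn (series (fun n => 1 * (pi_empty adj lam mu * Q adj lam mu AI AK n))).
Proof.
move=> H; rewrite /piA /rseries; case: ifP => J0.
  congr (limn _); apply: funext => N; rewrite seriesEnat /=; apply: eq_bigr => n _.
  rewrite -inner_pi //; apply: eq_bigr => c _; apply: eq_bigr => d _; by rewrite mul1r.
have -> : series (fun n => 1 * (pi_empty adj lam mu * Q adj lam mu AI AK n)) = fun _ => 0.
  apply: funext => N; rewrite seriesEnat /= big1 // => n _.
  by rewrite Q_zero ?J0 // !mulr0.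
by rewrite lim_cst.
Qed.

Lemma ellI_Q (R : realType) (I K : finType) (adj : I -> K -> bool)
  (lam : I -> R) (mu : K -> R) (AI : {set I}) (AK : {set K}) :
  indepP adj AI AK ->
  ellI adj lam mu AI AK = limn (series (fun n => n%:R * (pi_empty adj lam mu * Q adj lam mu AI AK n))).
Proof.
move=> H; rewrite /ellI /rseries; case: ifP => J0.
  congr (limn _); apply: funext => N; rewrite seriesEnat /=; apply: eq_bigr => n _.
  by rewrite -inner_pi.
have -> : series (fun n => n%:R * (pi_empty adj lam mu * Q adj lam mu AI AK n)) = fun _ => 0.
  apply: funext => N; rewrite seriesEnat /= big1 // => n _.
  by rewrite Q_zero ?J0 // !mulr0.
by rewrite lim_cst.
Qed.

Definition hseq (R : realType) (I K : finType) (lam : I -> R) (mu : K -> R)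
  (AI : {set I}) (AK : {set K}) (F : {set I} -> {set K} -> nat -> R) (n : nat) : R :=
  \sum_(i in AI) \sum_(k in AK) lam i * mu k *
     (F (AI :\ i) AK n + F AI (AK :\ k) n + F (AI :\ i) (AK :\ k) n).

Lemma rec_h (R : realType) (I K : finType) (adj : I -> K -> bool)
  (lam : I -> R) (mu : K -> R) (AI : {set I}) (AK : {set K}) n :
  mu_of mu (Kset adj AI) != 0 -> lam_of lam (Iset adj AK) != 0 ->
  mu_of mu (Kset adj AI) * lam_of lam (Iset adj AK) * Q adj lam mu AI AK n.+1 =
  lam_of lam AI * mu_of mu AK * Q adj lam mu AI AK n
  + hseq lam mu AI AK (Q adj lam mu) n.
Proof.
move=> x0 y0; rewrite Q_rec // /hseq /lam_of /mu_of mulr_suml mulr_suml -big_split /=.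
apply: eq_bigr => i _; rewrite -mulrA mulr_suml mulr_sumr -[RHS]big_split /=.
by apply: eq_bigr => k _; ring.
Qed.

Lemma hseq_n (R : realType) (I K : finType) (lam : I -> R) (mu : K -> R)
  (AI : {set I}) (AK : {set K}) (F : {set I} -> {set K} -> nat -> R) n :
  n%:R * hseq lam mu AI AK F n = hseq lam mu AI AK (fun B1 B2 m => m%:R * F B1 B2 m) n.
Proof.
rewrite /hseq mulr_sumr; apply: eq_bigr => i _; rewrite mulr_sumr.
by apply: eq_bigr => k _; ring.
Qed.

Lemma hseq_ge0 (R : realType) (I K : finType) (lam : I -> R) (mu : K -> R)
  (AI : {set I}) (AK : {set K}) (F : {set I} -> {set K} -> nat -> R) n :
  (forall i, 0 <= lam i) -> (forall k, 0 <= mu k) -> (forall B1 B2 m, 0 <= F B1 B2 m) ->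
  0 <= hseq lam mu AI AK F n.
Proof.
move=> Hl Hm HF; rewrite /hseq; apply: sumr_ge0 => i _; apply: sumr_ge0 => k _.
by apply: mulr_ge0; [apply: mulr_ge0 | rewrite !addr_ge0].
Qed.

Definition smaller (I K : finType) (AI : {set I}) (AK : {set K}) (B1 : {set I}) (B2 : {set K}) :=
  [&& B1 \subset AI, B2 \subset AK & #|B1| + #|B2| < #|AI| + #|AK|]%N.

Lemma smaller_i (I K : finType) (AI : {set I}) (AK : {set K}) i :
  i \in AI -> smaller AI AK (AI :\ i) AK.
Proof.
move=> iA; rewrite /smaller subD1set subxx /=.
by rewrite [#|AI|](cardsD1 i) iA ltn_add2r.
Qed.

Lemma smaller_k (I K : finType) (AI : {set I}) (AK : {set K}) k :
  k \in AK -> smaller AI AK AI (AK :\ k).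
Proof.
move=> kA; rewrite /smaller subD1set subxx /=.
by rewrite [#|AK|](cardsD1 k) kA ltn_add2l.
Qed.

Lemma smaller_ik (I K : finType) (AI : {set I}) (AK : {set K}) i k :
  i \in AI -> k \in AK -> smaller AI AK (AI :\ i) (AK :\ k).
Proof.
move=> iA kA; rewrite /smaller !subD1set /=.
rewrite [#|AK|](cardsD1 k) kA [#|AI|](cardsD1 i) iA.
by rewrite addSn addnS ltnS ltnW.
Qed.

Lemma hseq_cvg (R : realType) (I K : finType) (lam : I -> R) (mu : K -> R)
  (AI : {set I}) (AK : {set K}) (F : {set I} -> {set K} -> nat -> R) :
  (forall B1 B2, smaller AI AK B1 B2 -> cvgn (series (F B1 B2))) ->
  series (hseq lam mu AI AK F) @ \oo -->
  \sum_(i in AI) \sum_(k in AK) lam i * mu k *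
     (limn (series (F (AI :\ i) AK)) + limn (series (F AI (AK :\ k)))
      + limn (series (F (AI :\ i) (AK :\ k)))).
Proof.
move=> H; rewrite /hseq.
apply: series_sum_cvg => i iA.
apply: series_sum_cvg => k kA.
apply: series_scale.
apply: series_add; first apply: series_add.
- exact: (H _ _ (smaller_i _ iA)).
- exact: (H _ _ (smaller_k _ kA)).
- exact: (H _ _ (smaller_ik iA kA)).
Qed.

Lemma indep_sub (I K : finType) (adj : I -> K -> bool) (AI : {set I}) (AK : {set K}) B1 B2 :
  indepP adj AI AK -> smaller AI AK B1 B2 -> indepP adj B1 B2.
Proof.
move=> H /and3P [S1 S2 _] i k iB kB; apply: H.
  exact: (fintype.subsetP S1).
exact: (fintype.subsetP S2).
Qed.

Definition Hpos_def (R : realType) (I K : finType) (adj : I -> K -> bool)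
  (lam : I -> R) (mu : K -> R) :=
  forall AI AK, indepP adj AI AK -> AI != finset.set0 -> AK != finset.set0 ->
    [/\ 0 < mu_of mu (Kset adj AI), 0 < lam_of lam (Iset adj AK) &
        lam_of lam AI * mu_of mu AK < mu_of mu (Kset adj AI) * lam_of lam (Iset adj AK)].

Definition convP (R : realType) (I K : finType) (adj : I -> K -> bool)
  (lam : I -> R) (mu : K -> R) AI AK :=
  cvgn (series (Q adj lam mu AI AK)) /\ cvgn (series (fun n => n%:R * Q adj lam mu AI AK n)).

Lemma zero_series (R : realType) : series (fun _ : nat => (0 : R)) = (fun _ => 0).
Proof. by apply: funext => N; rewrite seriesEnat /= big1. Qed.

Lemma conv_step (R : realType) (I K : finType) (adj : I -> K -> bool)
  (lam : I -> R) (mu : K -> R) (Hl : forall i, 0 < lam i) (Hm : forall k, 0 < mu k)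
  (Hpos : Hpos_def adj lam mu) AI AK :
  (forall B1 B2, smaller AI AK B1 B2 -> indepP adj B1 B2 -> convP adj lam mu B1 B2) ->
  indepP adj AI AK -> convP adj lam mu AI AK.
Proof.
move=> IH Hind.
have Hl0 : forall i, 0 <= lam i by move=> i; apply: ltW.
have Hm0 : forall k, 0 <= mu k by move=> k; apply: ltW.
have Qge : forall B1 B2 n, 0 <= Q adj lam mu B1 B2 n by move=> *; apply: Q_ge0.
case: (boolP ((AI == finset.set0) || (AK == finset.set0))) => E.
  have QS : forall n, Q adj lam mu AI AK n.+1 = 0 by move=> n; apply: Q_S0.
  split.
    apply: (@G1 R _ (fun _ => 0) 1 0 (lexx 0) ltr01 (Qge AI AK) (fun _ => lexx 0)).
      by move=> n; rewrite QS mulr0 mul0r addr0.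
    by rewrite zero_series; apply: is_cvg_cst.
  have -> : series (fun n => n%:R * Q adj lam mu AI AK n) = (fun _ => 0).
    apply: funext => N; rewrite seriesEnat /= big1 // => -[|n] _.
      by rewrite mul0r.
    by rewrite QS mulr0.
  exact: is_cvg_cst.
rewrite negb_or in E; case/andP: E => AI0 AK0.
have [x0 y0 Dxy] := Hpos _ _ Hind AI0 AK0.
have Hrec := fun n => @rec_h R I K adj lam mu AI AK n (lt0r_neq0 x0) (lt0r_neq0 y0).
have v0 : 0 <= lam_of lam AI * mu_of mu AK.
  by apply: mulr_ge0; apply: sumr_ge0.
have IHs : forall B1 B2, smaller AI AK B1 B2 -> convP adj lam mu B1 B2.
  by move=> B1 B2 S; apply: IH => //; apply: indep_sub S.
have ch : cvgn (series (hseq lam mu AI AK (Q adj lam mu))).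
  apply: cvgP; exact: (@hseq_cvg R I K lam mu AI AK (Q adj lam mu) (fun B1 B2 S => (IHs B1 B2 S).1)).
have hge : forall n, 0 <= hseq lam mu AI AK (Q adj lam mu) n.
  by move=> n; apply: hseq_ge0.
have cf := @G1 R _ _ _ _ v0 Dxy (Qge AI AK) hge Hrec ch.
have cnh : cvgn (series (fun n => n%:R * hseq lam mu AI AK (Q adj lam mu) n)).
  have -> : (fun n => n%:R * hseq lam mu AI AK (Q adj lam mu) n) =
            hseq lam mu AI AK (fun B1 B2 m => m%:R * Q adj lam mu B1 B2 m).
    by apply: funext => n; apply: hseq_n.
  apply: cvgP; exact: (@hseq_cvg R I K lam mu AI AK (fun B1 B2 m => m%:R * Q adj lam mu B1 B2 m) (fun B1 B2 S => (IHs B1 B2 S).2)).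
have Q00 : Q adj lam mu AI AK 0 = 0 by apply: Q_0; rewrite AI0.
have [cg _] := @G3 R _ _ _ _ v0 Dxy (Qge AI AK) hge Hrec Q00 cf cnh.
by split.
Qed.

Lemma conv_all (R : realType) (I K : finType) (adj : I -> K -> bool)
  (lam : I -> R) (mu : K -> R) (Hl : forall i, 0 < lam i) (Hm : forall k, 0 < mu k)
  (Hpos : Hpos_def adj lam mu) AI AK :
  indepP adj AI AK -> convP adj lam mu AI AK.
Proof.
have [m Hsz] : exists m, (#|AI| + #|AK| <= m)%N by exists (#|AI| + #|AK|)%N.
elim: m AI AK Hsz => [|m IHm] AI AK Hsz Hind.
  apply: conv_step => // B1 B2 /and3P [_ _ S].
  by have := leq_trans S Hsz; rewrite ltn0.
apply: conv_step => // B1 B2 Sm Hi; apply: IHm => //.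
move/and3P: Sm => [_ _ S]; rewrite -ltnS; exact: leq_trans S Hsz.
Qed.

Definition EL (R : realType) (I K : finType) (adj : I -> K -> bool)
  (lam : I -> R) (mu : K -> R) B1 B2 :=
  limn (series (fun n => n%:R * Q adj lam mu B1 B2 n)).
Definition PL (R : realType) (I K : finType) (adj : I -> K -> bool)
  (lam : I -> R) (mu : K -> R) B1 B2 :=
  limn (series (Q adj lam mu B1 B2)).

Lemma main_id (R : realType) (I K : finType) (adj : I -> K -> bool)
  (lam : I -> R) (mu : K -> R) (Hl : forall i, 0 < lam i) (Hm : forall k, 0 < mu k)
  (Hpos : Hpos_def adj lam mu) AI AK :
  indepP adj AI AK -> AI != finset.set0 -> AK != finset.set0 ->
  mu_of mu (Kset adj AI) * lam_of lam (Iset adj AK) * EL adj lam mu AI AK =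
  lam_of lam AI * mu_of mu AK * EL adj lam mu AI AK
  + mu_of mu (Kset adj AI) * lam_of lam (Iset adj AK) * PL adj lam mu AI AK
  + \sum_(i in AI) \sum_(k in AK) lam i * mu k *
     (EL adj lam mu (AI :\ i) AK + EL adj lam mu AI (AK :\ k)
      + EL adj lam mu (AI :\ i) (AK :\ k)).
Proof.
move=> Hind AI0 AK0.
have Hl0 : forall i, 0 <= lam i by move=> i; apply: ltW.
have Hm0 : forall k, 0 <= mu k by move=> k; apply: ltW.
have Qge : forall B1 B2 n, 0 <= Q adj lam mu B1 B2 n by move=> *; apply: Q_ge0.
have [x0 y0 Dxy] := Hpos _ _ Hind AI0 AK0.
have Hrec := fun n => @rec_h R I K adj lam mu AI AK n (lt0r_neq0 x0) (lt0r_neq0 y0).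
have v0 : 0 <= lam_of lam AI * mu_of mu AK.
  by apply: mulr_ge0; apply: sumr_ge0.
have IHs : forall B1 B2, smaller AI AK B1 B2 -> convP adj lam mu B1 B2.
  by move=> B1 B2 S; apply: conv_all => //; apply: indep_sub S.
have hge : forall n, 0 <= hseq lam mu AI AK (Q adj lam mu) n.
  by move=> n; apply: hseq_ge0.
have [cf _] := conv_all Hl Hm Hpos Hind.
have E : (fun n => n%:R * hseq lam mu AI AK (Q adj lam mu) n) =
            hseq lam mu AI AK (fun B1 B2 m => m%:R * Q adj lam mu B1 B2 m).
  by apply: funext => n; apply: hseq_n.
have cv := (@hseq_cvg R I K lam mu AI AK (fun B1 B2 m => m%:R * Q adj lam mu B1 B2 m) (fun B1 B2 S => (IHs B1 B2 S).2)).
have cnh : cvgn (series (fun n => n%:R * hseq lam mu AI AK (Q adj lam mu) n)).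
  by rewrite E; apply: cvgP; exact: cv.
have Q00 : Q adj lam mu AI AK 0 = 0 by apply: Q_0; rewrite AI0.
have [_ ->] := @G3 R _ _ _ _ v0 Dxy (Qge AI AK) hge Hrec Q00 cf cnh.
by rewrite E (limE cv).
Qed.

Lemma sum_sub_le (R : realType) (T : finType) (f : T -> R) (A B : {set T}) :
  (forall x, 0 <= f x) -> A \subset B -> \sum_(x in A) f x <= \sum_(x in B) f x.
Proof.
move=> H S; rewrite [X in X <= _]big_mkcond [X in _ <= X]big_mkcond /=.
apply: ler_sum => x _; case: (boolP (x \in A)) => xA.
  by rewrite (fintype.subsetP S x xA).
by case: ifP.
Qed.

Lemma elem_le (R : realType) (T : finType) (f : T -> R) (A : {set T}) x :
  (forall x, 0 <= f x) -> x \in A -> f x <= \sum_(y in A) f y.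
Proof.
move=> H xA; have <- : \sum_(y in [set x]%SET) f y = f x by rewrite big_set1.
by apply: sum_sub_le => //; rewrite finset.sub1set.
Qed.

Lemma sum_compl (R : realType) (T : finType) (f : T -> R) (A : {set T}) :
  \sum_(x in ~: A) f x = \sum_x f x - \sum_(x in A) f x.
Proof.
rewrite [\sum_x f x](bigID (fun x => x \in A)) /= addrC addrK.
by apply: eq_bigl => x; rewrite inE.
Qed.

Lemma nbrK (I K : finType) (adj : I -> K -> bool) (i0 : I) :
  graph_connected adj -> forall k, exists i, adj i k.
Proof.
move=> Hc k; have /connectP [p pth lst] := Hc (inr k) (inl i0).
case: p pth lst => [|y p] /=; first by [].
case/andP => e _ _; case: y e => [i|k'] //= e.
by exists i.
Qed.

Lemma nbrI (I K : finType) (adj : I -> K -> bool) (k0 : K) :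
  graph_connected adj -> forall i, exists k, adj i k.
Proof.
move=> Hc i; have /connectP [p pth lst] := Hc (inl i) (inr k0).
case: p pth lst => [|y p] /=; first by [].
case/andP => e _ _; case: y e => [i'|k] //= e.
by exists k.
Qed.

Lemma Hpos_holds (R : realType) (I K : finType) (adj : I -> K -> bool)
  (lam : I -> R) (mu : K -> R)
  (Hconn : graph_connected adj)
  (Hl : forall i, 0 < lam i) (Hm : forall k, 0 < mu k)
  (Hl1 : \sum_(i : I) lam i = 1) (Hm1 : \sum_(k : K) mu k = 1)
  (Hstab : stable adj lam mu) : Hpos_def adj lam mu.
Proof.
move=> AI AK Hind AI0 AK0.
have Hl0 : forall i, 0 <= lam i by move=> i; apply: ltW.
have Hm0 : forall k, 0 <= mu k by move=> k; apply: ltW.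
have /set0Pn [i iA] := AI0.
have /set0Pn [k kA] := AK0.
have [k' ik'] := nbrI k Hconn i.
have [i' i'k] := nbrK i Hconn k.
have k'K : k' \in Kset adj AI by rewrite inE; apply/existsP; exists i; rewrite iA ik'.
have i'I : i' \in Iset adj AK by rewrite inE; apply/existsP; exists k; rewrite kA i'k.
have x0 : 0 < mu_of mu (Kset adj AI).
  by apply: lt_le_trans (Hm k') _; apply: elem_le.
have y0 : 0 < lam_of lam (Iset adj AK).
  by apply: lt_le_trans (Hl i') _; apply: elem_le.
have a0 : 0 <= lam_of lam AI by apply: sumr_ge0.
have b0 : 0 <= mu_of mu AK by apply: sumr_ge0.
have ax : lam_of lam AI < mu_of mu (Kset adj AI).
  apply: Hstab => //; apply/negP => /eqP E.
  by have := Hind i' k; rewrite E inE kA i'k => /(_ isT isT).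
have d1 : mu_of mu (Kset adj AI) <= 1 - mu_of mu AK.
  rewrite -Hm1 -sum_compl; apply: sum_sub_le => //.
  apply/fintype.subsetP => k2; rewrite !inE => /existsP [i2 /andP [i2A a2]].
  apply/negP => k2A; by have := Hind _ _ i2A k2A; rewrite a2.
have by0 : mu_of mu AK < lam_of lam (Iset adj AK).
  case: (eqVneq (~: Iset adj AK) finset.set0) => B0.
    have : lam_of lam (~: Iset adj AK) = 0 by rewrite B0 /lam_of big_set0.
    rewrite /lam_of sum_compl Hl1 -/(lam_of lam (Iset adj AK)) => E.
    have -> : lam_of lam (Iset adj AK) = 1 by lra.
    lra.
  have BT : ~: Iset adj AK != finset.setT.
    apply/negP => /eqP E; have : i' \in ~: Iset adj AK by rewrite E inE.
    by rewrite inE i'I.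
  have S := Hstab _ B0 BT.
  have d2 : mu_of mu (Kset adj (~: Iset adj AK)) <= 1 - mu_of mu AK.
    rewrite -Hm1 -sum_compl; apply: sum_sub_le => //.
    apply/fintype.subsetP => k2; rewrite !inE => /existsP [i2 /andP [i2B a2]].
    apply/negP => k2A; move: i2B; rewrite !inE; apply/negP; rewrite negbK.
    by apply/existsP; exists k2; rewrite k2A a2.
  move: S; rewrite /lam_of sum_compl Hl1 -/(lam_of lam (Iset adj AK)) => S.
  lra.
split => //; nra.
Qed.

Lemma ellI_cvg (R : realType) (I K : finType) (adj : I -> K -> bool)
  (lam : I -> R) (mu : K -> R) (Hl : forall i, 0 < lam i) (Hm : forall k, 0 < mu k)
  (Hpos : Hpos_def adj lam mu) AI AK :
  indepP adj AI AK ->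
  series (fun n => n%:R * (pi_empty adj lam mu * Q adj lam mu AI AK n)) @ \oo -->
  pi_empty adj lam mu * EL adj lam mu AI AK.
Proof.
move=> H; have [_ c2] := conv_all Hl Hm Hpos H.
have -> : (fun n => n%:R * (pi_empty adj lam mu * Q adj lam mu AI AK n)) =
          (fun n => pi_empty adj lam mu * (n%:R * Q adj lam mu AI AK n)).
  by apply: funext => n; ring.
exact: series_scale.
Qed.

Lemma ellI_EL (R : realType) (I K : finType) (adj : I -> K -> bool)
  (lam : I -> R) (mu : K -> R) (Hl : forall i, 0 < lam i) (Hm : forall k, 0 < mu k)
  (Hpos : Hpos_def adj lam mu) AI AK :
  indepP adj AI AK -> ellI adj lam mu AI AK = pi_empty adj lam mu * EL adj lam mu AI AK.
Proof.
by move=> H; rewrite ellI_Q // (limE (ellI_cvg Hl Hm Hpos H)).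
Qed.

Lemma piA_PL (R : realType) (I K : finType) (adj : I -> K -> bool)
  (lam : I -> R) (mu : K -> R) (Hl : forall i, 0 < lam i) (Hm : forall k, 0 < mu k)
  (Hpos : Hpos_def adj lam mu) AI AK :
  indepP adj AI AK -> piA adj lam mu AI AK = pi_empty adj lam mu * PL adj lam mu AI AK.
Proof.
move=> H; have [c1 _] := conv_all Hl Hm Hpos H.
rewrite piA_Q //.
have -> : (fun n => 1 * (pi_empty adj lam mu * Q adj lam mu AI AK n)) =
          (fun n => pi_empty adj lam mu * Q adj lam mu AI AK n).
  by apply: funext => n; rewrite mul1r.
by rewrite (limE (series_scale _ (pi_empty adj lam mu) _ c1)).
Qed.

Lemma inPi_J0 (I K : finType) (adj : I -> K -> bool) n (c : n.-tuple I) (d : n.-tuple K) :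
  in_Pi adj c d -> inJ0 adj (Sset c) (Sset d).
Proof.
move=> H; rewrite /inJ0 /inJ.
have Hi : independent adj (Sset c) (Sset d).
  apply/forallP => i; apply/implyP; rewrite inE => ic.
  apply/forallP => k; apply/implyP; rewrite inE => kd.
  by move/allP: H => /(_ i ic) /allP /(_ k kd).
rewrite Hi /=; clear Hi H; case: n c d => [|n] c d.
  by rewrite !Sset_tuple0 !eqxx orbT.
by rewrite !Sset_tupleS_neq0.
Qed.

Lemma indep_of (I K : finType) (adj : I -> K -> bool) AI AK :
  independent adj AI AK -> indepP adj AI AK.
Proof.
by move=> /forallP H i k iA kA; move: (H i); rewrite iA /= => /forallP /(_ k); rewrite kA.
Qed.

Lemma pointwise_LI (R : realType) (I K : finType) (adj : I -> K -> bool) n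
  (c : n.-tuple I) (d : n.-tuple K) (F : R) :
  (if in_Pi adj c d then F else 0) =
  \sum_(AI : {set I}) \sum_(AK : {set K} | inJ0 adj AI AK)
     (if in_PiA adj AI AK c d then F else 0).
Proof.
have E : forall AI AK, in_PiA adj AI AK c d = [&& in_Pi adj c d, Sset c == AI & Sset d == AK].
  by [].
case: (boolP (in_Pi adj c d)) => H.
  rewrite (bigD1 (Sset c)) //= (bigD1 (Sset d)) ?inPi_J0 //= E H !eqxx /=.
  rewrite big1 ?addr0; last by move=> AK /andP [_ N]; rewrite E H eqxx /= eq_sym (negbTE N).
  rewrite big1 ?addr0 // => AI N; rewrite big1 // => AK _.
  by rewrite E H eq_sym (negbTE N).
rewrite big1 // => AI _; rewrite big1 // => AK _; by rewrite E (negbTE H).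
Qed.

Lemma J0_indep (I K : finType) (adj : I -> K -> bool) AI AK :
  inJ0 adj AI AK -> indepP adj AI AK.
Proof.
case/orP => [/and3P [H _ _]|/andP [/eqP -> /eqP ->]]; first exact: indep_of.
by move=> i k; rewrite inE.
Qed.

Theorem proposition3 (R : realType) (I K : finType) (adj : I -> K -> bool)
  (lam : I -> R) (mu : K -> R)
  (Hconn : graph_connected adj)
  (Hlam : forall i, 0 < lam i) (Hmu : forall k, 0 < mu k)
  (Hlam1 : \sum_(i : I) lam i = 1) (Hmu1 : \sum_(k : K) mu k = 1)
  (Hstab : stable adj lam mu) :
  LI adj lam mu = \sum_(AI : {set I}) \sum_(AK : {set K} | inJ0 adj AI AK) ellI adj lam mu AI AK
  /\ ellI adj lam mu finset.set0 finset.set0 = 0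
  /\ (forall (AI : {set I}) (AK : {set K}), inJ adj AI AK ->
        Delta adj lam mu AI AK * ellI adj lam mu AI AK =
          mu_of mu (Kset adj AI) * lam_of lam (Iset adj AK) * piA adj lam mu AI AK
        + mu_of mu AK * \sum_(i in AI) lam i * ellI adj lam mu (AI :\ i) AK
        + lam_of lam AI * \sum_(k in AK) mu k * ellI adj lam mu AI (AK :\ k)
        + \sum_(i in AI) \sum_(k in AK) lam i * mu k * ellI adj lam mu (AI :\ i) (AK :\ k)).
Proof.
have Hpos := Hpos_holds Hconn Hlam Hmu Hlam1 Hmu1 Hstab.
split; [|split].
- rewrite /LI /rseries.
  have E : forall n, \sum_(c : n.-tuple I) \sum_(d : n.-tuple K | in_Pi adj c d)
                       n%:R * pi_state adj lam mu c d =
    \sum_(AI : {set I}) \sum_(AK : {set K} | inJ0 adj AI AK)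
       n%:R * (pi_empty adj lam mu * Q adj lam mu AI AK n).
    move=> n.
    transitivity (\sum_(c : n.-tuple I) \sum_(d : n.-tuple K)
       \sum_(AI : {set I}) \sum_(AK : {set K} | inJ0 adj AI AK)
       (if in_PiA adj AI AK c d then n%:R * pi_state adj lam mu c d else 0)).
      apply: eq_bigr => c _; rewrite big_mkcond; apply: eq_bigr => d _.
      exact: pointwise_LI.
    transitivity (\sum_(c : n.-tuple I) \sum_(AI : {set I}) \sum_(AK : {set K} | inJ0 adj AI AK)
       \sum_(d : n.-tuple K)
       (if in_PiA adj AI AK c d then n%:R * pi_state adj lam mu c d else 0)).
      apply: eq_bigr => c _; rewrite exchange_big; apply: eq_bigr => AI _.
      by rewrite exchange_big.
    rewrite exchange_big; apply: eq_bigr => AI _.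
    rewrite exchange_big; apply: eq_bigr => AK J0.
    rewrite -inner_pi; last exact: J0_indep.
    by apply: eq_bigr => c _; rewrite [RHS]big_mkcond.
  transitivity (limn (series (fun n => \sum_(AI : {set I}) \sum_(AK : {set K} | inJ0 adj AI AK)
       n%:R * (pi_empty adj lam mu * Q adj lam mu AI AK n)))).
    congr (limn _); apply: funext => N; rewrite seriesEnat /=; apply: eq_bigr => n _.
    exact: E.
  apply: limE.
  apply: series_sum_cvg => AI _; apply: series_sum_cvg => AK J0.
  rewrite (ellI_EL Hlam Hmu Hpos (J0_indep J0)).
  exact: (ellI_cvg Hlam Hmu Hpos (J0_indep J0)).
- have Hi : indepP adj (finset.set0 : {set I}) (finset.set0 : {set K}).
    by move=> i k; rewrite inE.
  rewrite ellI_Q //.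
  have -> : series (fun n => n%:R * (pi_empty adj lam mu *
                      Q adj lam mu finset.set0 finset.set0 n)) = (fun _ => 0).
    apply: funext => N; rewrite seriesEnat /= big1 // => -[|n] _.
      by rewrite mul0r.
    by rewrite Q_S0 ?eqxx // !mulr0.
  by rewrite lim_cst.
move=> AI AK /and3P [Hi AI0 AK0].
have Hind := indep_of Hi.
set pe := pi_empty adj lam mu.
rewrite (ellI_EL Hlam Hmu Hpos Hind) (piA_PL Hlam Hmu Hpos Hind) -/pe.
have S1 : \sum_(i in AI) lam i * ellI adj lam mu (AI :\ i) AK =
          pe * \sum_(i in AI) lam i * EL adj lam mu (AI :\ i) AK.
  rewrite mulr_sumr; apply: eq_bigr => i iA.
  rewrite (ellI_EL Hlam Hmu Hpos (indep_sub Hind (smaller_i _ iA))) -/pe; ring.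
have S2 : \sum_(k in AK) mu k * ellI adj lam mu AI (AK :\ k) =
          pe * \sum_(k in AK) mu k * EL adj lam mu AI (AK :\ k).
  rewrite mulr_sumr; apply: eq_bigr => k kA.
  rewrite (ellI_EL Hlam Hmu Hpos (indep_sub Hind (smaller_k _ kA))) -/pe; ring.
have S3 : \sum_(i in AI) \sum_(k in AK) lam i * mu k * ellI adj lam mu (AI :\ i) (AK :\ k) =
          pe * \sum_(i in AI) \sum_(k in AK) lam i * mu k * EL adj lam mu (AI :\ i) (AK :\ k).
  rewrite mulr_sumr; apply: eq_bigr => i iA; rewrite mulr_sumr; apply: eq_bigr => k kA.
  rewrite (ellI_EL Hlam Hmu Hpos (indep_sub Hind (smaller_ik iA kA))) -/pe; ring.
rewrite S1 S2 S3.
have M := main_id Hlam Hmu Hpos Hind AI0 AK0.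
have T : \sum_(i in AI) \sum_(k in AK) lam i * mu k *
     (EL adj lam mu (AI :\ i) AK + EL adj lam mu AI (AK :\ k)
      + EL adj lam mu (AI :\ i) (AK :\ k)) =
   mu_of mu AK * \sum_(i in AI) lam i * EL adj lam mu (AI :\ i) AK
   + lam_of lam AI * \sum_(k in AK) mu k * EL adj lam mu AI (AK :\ k)
   + \sum_(i in AI) \sum_(k in AK) lam i * mu k * EL adj lam mu (AI :\ i) (AK :\ k).
  transitivity (\sum_(i in AI) \sum_(k in AK) lam i * mu k * EL adj lam mu (AI :\ i) AK
     + \sum_(i in AI) \sum_(k in AK) lam i * mu k * EL adj lam mu AI (AK :\ k)
     + \sum_(i in AI) \sum_(k in AK) lam i * mu k * EL adj lam mu (AI :\ i) (AK :\ k)).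
    rewrite -[in RHS]big_split -[in RHS]big_split /=; apply: eq_bigr => i _.
    rewrite -[in RHS]big_split -[in RHS]big_split /=; apply: eq_bigr => k _; ring.
  congr (_ + _ + _).
    rewrite mulr_sumr; apply: eq_bigr => i _.
    rewrite /mu_of mulr_suml; apply: eq_bigr => k _; ring.
  rewrite exchange_big mulr_sumr; apply: eq_bigr => k _.
  rewrite /lam_of mulr_suml; apply: eq_bigr => i _; ring.
rewrite T in M.
rewrite /Delta.
set x := mu_of mu (Kset adj AI) in M *; set y := lam_of lam (Iset adj AK) in M *.
set a := lam_of lam AI in M *; set b := mu_of mu AK in M *.
set EA := EL adj lam mu AI AK in M *; set PA := PL adj lam mu AI AK in M *.
set X3 := \sum_(i in AI) \sum_(k in AK) _ in M *.
set X1 := \sum_(i in AI) _ in M *.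
set X2 := \sum_(k in AK) _ in M *.
have M' : (x * y - a * b) * EA = x * y * PA + b * X1 + a * X2 + X3.
  by rewrite mulrBl M; ring.
transitivity (pe * ((x * y - a * b) * EA)); first by ring.
by rewrite M'; ring.
Qed.
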